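(* Let $R$ be a $*$-ring and let $R[i]=\{a+bi \mid a,b\in R\}$, where $i$ commutes with every element of $R$ and $i^2=-1$, equipped with the involution $(a+bi)^*=a^*+b^*i$. Then $R[i]$ is strongly $J$-$*$-clean if and only if $R$ is strongly $J$-$*$-clean.
   Context: All rings are associative with identity. A $*$-ring is a ring $R$ with an involution $*$, i.e. a map $a\mapsto a^*$ with $(a+b)^*=a^*+b^*$, $(ab)^*=b^*a^*$, $(a^* )^*=a$. $J(R)$ denotes the Jacobson radical of $R$. A projection is an element $e$ with $e^2=e=e^*$. A $*$-ring $R$ is strongly $J$-$*$-clean if every $a\in R$ can be written $a=e+u$ with $e$ a projection, $u\in J(R)$ and $ae=ea$. *)

(* Defs.v *)
From HB Require Import structures.
From mathcomp Require Import all_boot all_order all_algebra.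

Set Implicit Arguments.
Unset Strict Implicit.
Unset Printing Implicit Defensive.

Import GRing.Theory.
Local Open Scope ring_scope.

Definition is_involution (R : pzRingType) (star : R -> R) : Prop :=
  [/\ forall a b : R, star (a + b) = star a + star b,
      forall a b : R, star (a * b) = star b * star a
    & forall a : R, star (star a) = a].

Definition left_ideal (R : pzRingType) (I : R -> Prop) : Prop :=
  [/\ I 0,
      forall x y, I x -> I y -> I (x + y)
    & forall r x, I x -> I (r * x)].

Definition maximal_left_ideal (R : pzRingType) (I : R -> Prop) : Prop :=
  [/\ left_ideal I, ~ I 1 &
      forall K : R -> Prop, left_ideal K -> ~ K 1 ->
        (forall x, I x -> K x) -> forall x, K x -> I x].

Definition jacobson (R : pzRingType) (a : R) : Prop :=
  forall I : R -> Prop, maximal_left_ideal I -> I a.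

Definition projection (R : pzRingType) (star : R -> R) (e : R) : Prop :=
  e * e = e /\ star e = e.

Definition strongly_J_star_clean (R : pzRingType) (star : R -> R) : Prop :=
  forall a : R, exists e u : R,
    [/\ projection star e, jacobson u, a = e + u & a * e = e * a].

(* R[i] = { a + b i | a, b in R }, i central, i^2 = -1,                *)
(* represented by pairs (a, b) standing for a + b i.                  *)
Definition gauss (R : Type) : Type := (R * R)%type.

Section Gauss.
Variable R : pzRingType.

HB.instance Definition _ := GRing.Zmodule.on (gauss R).

Definition gauss_one : gauss R := (1, 0).
Definition gauss_mul (x y : gauss R) : gauss R :=
  (x.1 * y.1 - x.2 * y.2, x.1 * y.2 + x.2 * y.1).

Lemma gauss_mulA : associative gauss_mul.
Proof.
move=> [a b] [c d] [e f]; rewrite /gauss_mul /=; congr pair;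
  rewrite !(mulrDl, mulrDr, mulNr, mulrN, mulrA, opprD) -!addrA; congr (_ + _);
  by rewrite [RHS]addrC -addrA.
Qed.

Lemma gauss_mul1r : left_id gauss_one gauss_mul.
Proof.
by move=> [a b]; rewrite /gauss_mul /= !mul1r !mul0r subr0 addr0.
Qed.

Lemma gauss_mulr1 : right_id gauss_one gauss_mul.
Proof.
by move=> [a b]; rewrite /gauss_mul /= !mulr1 !mulr0 subr0 add0r.
Qed.

Lemma gauss_mulDl : left_distributive gauss_mul +%R.
Proof.
move=> [a b] [c d] [e f]; rewrite /gauss_mul /=.
congr pair => /=; rewrite !mulrDl ?opprD -!addrA; congr (_ + _);
  exact: addrCA.
Qed.

Lemma gauss_mulDr : right_distributive gauss_mul +%R.
Proof.
move=> [a b] [c d] [e f]; rewrite /gauss_mul /=.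
congr pair => /=; rewrite !mulrDr ?opprD -!addrA; congr (_ + _);
  exact: addrCA.
Qed.

HB.instance Definition _ := GRing.Zmodule_isPzRing.Build (gauss R)
  gauss_mulA gauss_mul1r gauss_mulr1 gauss_mulDl gauss_mulDr.

Definition gauss_star (star : R -> R) (x : gauss R) : gauss R :=
  (star x.1, star x.2).

Definition gauss_i : gauss R := (0, 1).

End Gauss.

(* Main.v *)
Require Import Defs.
From HB Require Import structures.
From mathcomp Require Import all_boot all_order all_algebra.
From mathcomp Require classical_sets boolp.
From Stdlib Require Import Classical.
Import GRing.Theory.
Local Open Scope ring_scope.

Section Jac.
Variable R : pzRingType.
Implicit Types x y r : R.

Lemma jac_add x y : jacobson x -> jacobson y -> jacobson (x + y).
Proof. by move=> hx hy I hI; case: (hI) => [[_ hadd _] _ _]; apply: hadd; [apply: hx|apply: hy]. Qed.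

Lemma jac_mull r x : jacobson x -> jacobson (r * x).
Proof. by move=> hx I hI; case: (hI) => [[_ _ hm] _ _]; apply: hm; apply: hx. Qed.

Lemma jac0 : jacobson (0 : R).
Proof. by move=> I [[h0 _ _] _ _]. Qed.

Lemma linv_jac x : (forall r, exists v, v * (1 - r * x) = 1) -> jacobson x.
Proof.
move=> hl I [[I0 Iadd Imul] I1 Imax].
case: (classic (I x)) => // nIx.
pose K := fun y => exists i r, I i /\ y = i + r * x.
have lK : left_ideal K.
  split.
  - by exists 0, 0; rewrite mul0r addr0.
  - move=> y z [i [r [Ii ->]]] [j [s [Ij ->]]]; exists (i + j), (r + s).
    by split; [apply: Iadd | rewrite mulrDl addrACA].
  - move=> s y [i [r [Ii ->]]]; exists (s * i), (s * r).
    by split; [apply: Imul | rewrite mulrDr mulrA].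
case: (classic (K 1)) => [[i [r [Ii e]]]|nK1].
  have ei : i = 1 - r * x by rewrite e addrK.
  case: (hl r) => v hv; exfalso; apply: I1; rewrite -hv -ei; exact: Imul.
exfalso; apply: nIx; apply: (Imax K lK nK1).
- by move=> y Iy; exists y, 0; rewrite mul0r addr0.
- by exists 0, 1; rewrite mul1r add0r.
Qed.

Lemma jac_linv x : jacobson x -> forall r, exists v, v * (1 - r * x) = 1.
Proof.
move=> hx r; apply: NNPP => hn.
pose L := fun y : R => exists s, y = s * (1 - r * x).
pose P := fun A : R -> Prop => [/\ left_ideal A, ~ A 1 & forall y, L y -> A y].
have lL : left_ideal L.
  split.
  - by exists 0; rewrite mul0r.
  - by move=> y z [s ->] [t ->]; exists (s + t); rewrite mulrDl.
  - by move=> s y [t ->]; exists (s * t); rewrite mulrA.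
have PL : P L by split => // -[s hs]; apply: hn; exists s.
pose T := {A : R -> Prop | P A}.
pose Rel := fun s t : T => boolp.asbool (forall y, proj1_sig s y -> proj1_sig t y).
have [t tmax] : exists t, classical_sets.premaximal (fun a b => Rel a b) t.
  apply: (@classical_sets.ZL_preorder T (exist _ L PL) Rel).
  - by move=> t; apply/boolp.asboolP.
  - move=> a b c /boolp.asboolP hab /boolp.asboolP hbc; apply/boolp.asboolP => y /hab; exact: hbc.
  - move=> A Atot.
    case: (classic (exists s, A s)) => [[s0 As0]|nA]; last first.
      by exists (exist _ L PL) => s As; exfalso; apply: nA; exists s.
    pose U := fun y => exists s, A s /\ proj1_sig s y.
    have incl : forall a b, A a -> A b -> (forall y, proj1_sig a y -> proj1_sig b y) \/
                                          (forall y, proj1_sig b y -> proj1_sig a y).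
      by move=> a b Aa Ab; case: (Atot a b Aa Ab) => /boolp.asboolP h; [left|right].
    have PU : P U.
      split.
      - split.
        + exists s0; split => //; case: (proj2_sig s0) => [[]] //.
        + move=> y z [a [Aa ay]] [b [Ab bz]].
          case: (incl a b Aa Ab) => h.
          * exists b; split => //; case: (proj2_sig b) => [[_ ad _]] _ _; apply: ad => //; exact: h.
          * exists a; split => //; case: (proj2_sig a) => [[_ ad _]] _ _; apply: ad => //; exact: h.
        + move=> s y [a [Aa ay]]; exists a; split => //.
          by case: (proj2_sig a) => [[_ _ am]] _ _; apply: am.
      - by move=> [a [Aa a1]]; case: (proj2_sig a) => _ h _; apply: h.
      - by move=> y Ly; exists s0; split => //; case: (proj2_sig s0) => _ _ h; apply: h.
    exists (exist _ U PU) => s As; apply/boolp.asboolP => y sy /=; exists s; split.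
    done. done.
move: t tmax => [I PI] tmax; case: (PI) => [[I0 Iadd Imul] I1 IL].
have mI : maximal_left_ideal I.
  split => // K lK nK1 IK y Ky.
  have PK : P K by split => // z Lz; apply: IK; apply: IL.
  have := tmax (exist _ K PK); rewrite /Rel /=.
  move=> h; have /boolp.asboolP h2 := h (introT (boolp.asboolP _) IK).
  exact: h2.
have Ix := hx I mI.
apply: I1; rewrite -(subrK (r * x) 1); apply: Iadd; first by apply: IL; exists 1; rewrite mul1r.
exact: Imul.
Qed.




Lemma jac_unit x : jacobson x -> exists w, w * (1 - x) = 1 /\ (1 - x) * w = 1.
Proof.
move=> hx; have [v hv] := jac_linv _ hx 1; rewrite mul1r in hv.
have ev : v = 1 - (- v) * x by rewrite mulNr opprK -{1}hv mulrBr mulr1 subrK.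
have [w hw] := jac_linv _ hx (- v); rewrite -ev in hw.
have wv : w = 1 - x.
  by rewrite -[LHS]mulr1 -{1}hv mulrA hw mul1r.
by exists v; split => //; rewrite -wv.
Qed.

Lemma jac_central_sq x : (forall r, r * x = x * r) -> jacobson (x * x) -> jacobson x.
Proof.
move=> hc hx; apply: linv_jac => r.
have [w hw] := jac_linv _ hx (r * r).
exists (w * (1 + r * x)); rewrite -mulrA.
suff -> : (1 + r * x) * (1 - r * x) = 1 - r * r * (x * x) by [].
rewrite mulrDl mul1r mulrBr mulr1 addrA subrK.
by rewrite -!mulrA (mulrA x r x) -hc !mulrA.
Qed.

Lemma idem_add e x : e * e = e -> e * x = x -> x * e = 0 -> (e + x) * (e + x) = e + x.
Proof.
move=> he hex hxe; rewrite mulrDl !mulrDr he hex hxe add0r.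
have -> : x * x = 0 by rewrite -{2}hex mulrA hxe mul0r.
by rewrite addr0.
Qed.

Lemma idem_add' e x : e * e = e -> x * e = x -> e * x = 0 -> (e + x) * (e + x) = e + x.
Proof.
move=> he hxe hex; rewrite mulrDl !mulrDr he hex hxe addr0.
have -> : x * x = 0 by rewrite -{1}hxe -mulrA hex mulr0.
by rewrite addr0.
Qed.
End Jac.
Arguments jac_linv {R x}.

Lemma two_fact (R : pzRingType) (e : R) : e * e = e -> (1 + 1 - e) * (1 + e) = 1 + 1.
Proof.
move=> hee. rewrite mulrDr mulr1 mulrBl hee mulrDl mul1r.
rewrite addrK. by rewrite addrNK.
Qed.
Arguments jac_unit {R x}.

Section Star.
Variable R : pzRingType.
Variable star : R -> R.
Hypothesis hs : is_involution star.

Lemma star0 : star 0 = 0.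
Proof. case: hs => sadd _ _; by apply: (addrI (star 0)); rewrite -sadd !addr0. Qed.

Lemma starN x : star (- x) = - star x.
Proof. case: hs => sadd _ _; by apply: (addrI (star x)); rewrite -sadd !subrr star0. Qed.

Lemma star1 : star 1 = 1.
Proof. case: hs => _ smul sinv; have h := smul 1 (star 1).
by rewrite mul1r !sinv mul1r in h. Qed.

Hypothesis hc : strongly_J_star_clean star.

Lemma sj_idem_proj g : g * g = g -> star g = g.
Proof.
move=> hgg; have [f [u [[hff hsf] hu hgu hcomm]]] := hc g.
have eu : u = g - f by rewrite hgu [f + u]addrC addrK.
have hfg : f * g = g * f by [].
have pg : g * f * g = g * f by rewrite -mulrA hfg mulrA hgg.
have pf : g * f * f = g * f by rewrite -mulrA hff.
have uu : u * u = (g - g * f) - (g * f - f) by rewrite eu mulrBr !mulrBl hgg hff hfg.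
have uuu : u * u * u = u.
  rewrite {3}eu mulrBr uu !mulrBl hgg pg hfg pf hff subrr sub0r opprB.
  by rewrite eu opprB subr0 addrA subrK.
have [v hv] := jac_linv hu u.
have u0 : u = 0.
  have -> : u = v * (1 - u * u) * u by rewrite hv mul1r.
  by rewrite -mulrA mulrBl mul1r uuu subrr mulr0.
by move: hgu; rewrite u0 addr0 => ->.
Qed.

Lemma star1m e : star e = e -> star (1 - e) = 1 - e.
Proof. by case: hs => sadd _ _ he; rewrite sadd starN star1 he. Qed.

Lemma sj_central e : projection star e -> forall r, e * r = r * e.
Proof.
move=> [hee hse] r; case: hs => sadd smul sinv.
have eq1 : e * (1 - e) = 0 by rewrite mulrBr mulr1 hee subrr.
have eq2 : (1 - e) * e = 0 by rewrite mulrBl mul1r hee subrr.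
have eq3 : (1 - e) * (1 - e) = 1 - e by rewrite mulrBr mulr1 eq2 subr0.
have h1 : e * r * (1 - e) = 0.
  set x := e * r * (1 - e).
  have ex : e * x = x by rewrite /x !mulrA hee.
  have gi : (e + x) * (e + x) = e + x.
    by apply: idem_add => //; rewrite /x -mulrA eq2 mulr0.
  have := sj_idem_proj _ gi; rewrite sadd hse => /addrI.
  rewrite /x !smul (star1m _ hse) hse => hx.
  transitivity (e * (e * r * (1 - e))); first by rewrite !mulrA hee.
  by rewrite -hx mulrA eq1 mul0r.
have h2 : (1 - e) * r * e = 0.
  set x := (1 - e) * r * e.
  have ex : (1 - e) * x = x by rewrite /x !mulrA eq3.
  have gi : (e + x) * (e + x) = e + x.
    apply: idem_add'.
    - done.
    - by rewrite /x -[(1 - e) * r * e * e]mulrA hee.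
    by rewrite /x !mulrA eq1 !mul0r.
  have := sj_idem_proj _ gi; rewrite sadd hse => /addrI.
  rewrite /x !smul (star1m _ hse) hse => hx.
  transitivity ((1 - e) * ((1 - e) * r * e)); first by rewrite !mulrA eq3.
  by rewrite -hx (mulrA (1 - e) e) eq2 mul0r.
move: h1 h2; rewrite mulrBr mulr1 !mulrBl !mul1r => /eqP; rewrite subr_eq0 => /eqP ->.
by rewrite -[e * r * e * e]mulrA hee => /eqP; rewrite subr_eq0 => /eqP ->.
Qed.

Lemma sj_two : jacobson (1 + 1 : R).
Proof.
have [e [u [[hee hse] hu hgu _]]] := hc (-1).
have he : 1 + e = (-1) * u by rewrite mulN1r; apply: (addIr u); rewrite addNr -addrA -hgu subrr.
have hj : jacobson (1 + e) by rewrite he; apply: jac_mull.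
by have := jac_mull _ (1 + 1 - e) _ hj; rewrite two_fact.
Qed.

End Star.

Section G.
Variable R : pzRingType.
Lemma gmulE (x y : gauss R) : x * y = (x.1*y.1 - x.2*y.2, x.1*y.2 + x.2*y.1). Proof. by []. Qed.
Lemma gaddE (x y : gauss R) : x + y = (x.1+y.1, x.2+y.2). Proof. by []. Qed.
Lemma goneE : (1 : gauss R) = (1,0). Proof. by []. Qed.
Lemma goppE (x : gauss R) : - x = (-x.1, -x.2). Proof. by []. Qed.
Lemma gzeroE : (0 : gauss R) = (0,0). Proof. by []. Qed.
Lemma gsubE (x y : gauss R) : x - y = (x.1-y.1, x.2-y.2). Proof. by []. Qed.

Lemma gauss_invol (star : R -> R) : is_involution star ->
  is_involution (gauss_star star : gauss R -> gauss R).
Proof.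
move=> hs; have [sadd smul sinv] := hs.
have sB : forall a b, star (a - b) = star a - star b by move=> a b; rewrite sadd starN.
split.
- by move=> [a b] [c d]; rewrite /gauss_star /= !sadd.
- move=> [a b] [c d]; rewrite /gauss_star !gmulE /= sB !sadd !smul.
  by congr pair; rewrite addrC.
- by move=> [a b]; rewrite /gauss_star /= !sinv.
Qed.

Lemma gjac_emb (p : R) : jacobson p -> jacobson ((p, 0) : gauss R).
Proof.
move=> hp; apply: linv_jac => -[s1 s2].
have hP := jac_mull _ s1 _ hp; have hQ := jac_mull _ s2 _ hp.
set P := s1 * p in hP *; set Q := s2 * p in hQ *.
have [w [hw1 hw2]] := jac_unit hP.
have hQ' := jac_mull _ w _ hQ; set Q' := w * Q in hQ' *.
have [z hz] := jac_linv hQ' (- Q').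
pose A : gauss R := (1 - P, 0); pose B : gauss R := (1, - Q').
pose D : gauss R := (1, Q'); pose W : gauss R := (w, 0); pose Z : gauss R := (z, 0).
have AB : 1 - ((s1, s2) : gauss R) * (p, 0) = A * B.
  rewrite /A /B gsubE !gmulE /= !mulr0 !mul0r !mulr1 !subr0 !add0r !addr0.
  by congr pair; rewrite mulrN /Q' mulrA hw2 mul1r.
have WA : W * A = 1 by rewrite /W /A gmulE /= hw1 !mulr0 !mul0r subr0 addr0.
have DB : D * B = (1 + Q' * Q', 0).
  by rewrite /D /B gmulE /= !mulr1 !mul1r mulrN opprK addNr.
have ZD : Z * (1 + Q' * Q', 0) = 1.
  by rewrite /Z gmulE /= !mulr0 !mul0r subr0 addr0; move: hz; rewrite mulNr opprK => ->.
exists (Z * D * W); rewrite AB -(mulrA (Z * D) W) (mulrA W A B) WA mul1r -(mulrA Z D B) DB ZD //.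
Qed.

Lemma gjac_proj (p : R) : jacobson ((p, 0) : gauss R) -> jacobson p.
Proof.
move=> hp; apply: linv_jac => r.
have [v /(congr1 fst) hv] := jac_linv hp (r, 0).
exists v.1; move: hv; rewrite gsubE !gmulE /= !mulr0 !mul0r addr0 subr0 subrr mulr0 subr0.
done.
Qed.

Lemma gjac_pair (p q : R) : jacobson p -> jacobson q -> jacobson ((p, q) : gauss R).
Proof.
move=> hp hq.
have -> : ((p, q) : gauss R) = ((p, 0) : gauss R) + ((0, 1) : gauss R) * ((q, 0) : gauss R).
  by rewrite gaddE gmulE /= !mulr0 !mul0r mul1r subrr !addr0 !add0r.
apply: jac_add; first exact: gjac_emb p hp.
by apply: jac_mull; exact: gjac_emb q hq.
Qed.

End G.

Theorem proposition4p2 (R : pzRingType) (star : R -> R) :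
  is_involution star ->
  (strongly_J_star_clean (gauss_star star : gauss R -> gauss R) <->
   strongly_J_star_clean star).
Proof.
move=> hs; have hgs := gauss_invol _ _ hs.
split => hc.
- move=> a.
  have [[e1 e2] [U [[hee hse] hU haeU hcomm]]] := hc ((a, 0) : gauss R).
  have ecent := sj_central _ _ hgs hc _ (conj hee hse).
  have two : jacobson (1 + 1 : R).
    apply: gjac_proj; have := sj_two _ _ hc.
    by rewrite gaddE /= addr0.
  have he1 : forall r, e1 * r = r * e1.
    move=> r; have /(congr1 fst) := ecent (r, 0).
    by rewrite !gmulE /= !mulr0 !mul0r !subr0.
  have e20 : e2 = 0.
    have [v hv] := jac_linv two e1.
    have h2 : (1 - e1 * (1 + 1)) * e2 = 0.
      have /(congr1 snd) := hee; rewrite gmulE /= => h.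
      rewrite mulrBl mul1r mulrDr mulr1 mulrDl (he1 e2) -{1}h.
      by rewrite (he1 e2) subrr.
    by rewrite -[e2]mul1r -hv -mulrA h2 mulr0.
  subst e2.
  exists e1, (a - e1); split.
  + split.
      by have /(congr1 fst) := hee; rewrite gmulE /= mulr0 subr0.
    by have /(congr1 fst) := hse.
  + apply: gjac_proj.
    have hU' : U = ((a, 0) : gauss R) - ((e1, 0) : gauss R).
      by rewrite haeU [_ + U]addrC addrK.
    by rewrite hU' gsubE /= subr0 in hU.
  + by rewrite addrC subrK.
  + by have /(congr1 fst) := hcomm; rewrite !gmulE /= !mulr0 !subr0.
- move=> [a b].
  have [f [u [[hff hsf] hu habu hcomm]]] := hc (a - b).
  have fc := sj_central _ _ hs hc _ (conj hff hsf).
  have two := sj_two _ _ hc.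
  have eu : u = a - b - f by rewrite habu [f + u]addrC addrK.
  exists ((f, 0) : gauss R), ((a - f, b) : gauss R); split.
  + split; first by rewrite gmulE /= hff !mulr0 !mul0r subr0 addr0.
    by rewrite /gauss_star /= hsf star0.
  + have -> : ((a - f, b) : gauss R) = ((u, 0) : gauss R) + ((b, 0) : gauss R) * ((1, 1) : gauss R).
      rewrite gaddE gmulE /= !mulr1 subr0 addr0 add0r eu.
      by rewrite -addrA [- f + b]addrC addrA subrK.
    apply: jac_add; first exact: gjac_emb.
    apply: jac_mull; apply: jac_central_sq.
      by move=> [r1 r2]; rewrite !gmulE /= !mulr1 !mul1r [r2 + r1]addrC.
    rewrite gmulE /= mulr1 subrr.
    exact: gjac_pair (jac0 _) two.
  + by rewrite gaddE /= add0r addrC subrK.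
  + by rewrite !gmulE /= !mulr0 !mul0r subr0 addr0 subr0 add0r (fc a) (fc b).
Qed.
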